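(* Let $w=w_1\cdots w_N$ be a 132-avoiding sorting network of $\mathfrak S_n$ and let $1\le i<j\le n$. Then the (unique) step $k$ at which the values $i$ and $j$ are interchanged, i.e. at which $\sigma_k$ is obtained from $\sigma_{k-1}$ by swapping the adjacent entries $i$ and $j$, satisfies $w_k=j-i$.
   Context: $N=\binom n2$, $s_i=(i,i+1)$, $w_0$ the reverse permutation $w_0(i)=n+1-i$. A sorting network is a word $w_1\cdots w_N$ over $[n-1]$ with $s_{w_1}\cdots s_{w_N}=w_0$; intermediate permutations $\sigma_0=\mathrm{id}$, $\sigma_k=s_{w_1}\cdots s_{w_k}$, where in one-line notation $\sigma_k$ is obtained from $\sigma_{k-1}$ by swapping the entries in positions $w_k$ and $w_k+1$. It is 132-avoiding if every $\sigma_k$ avoids the pattern 132. In a sorting network each pair of values is swapped exactly once. *)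

(* Defs.v *)
From mathcomp Require Import all_boot.
Set Implicit Arguments. Unset Strict Implicit. Unset Printing Implicit Defensive.

(* Permutations of [1..n] in one-line notation as sequences of nat.
   Positions are 1-indexed: entry at position a is nth 0 p (a-1). *)
Definition entry (p : seq nat) (a : nat) : nat := nth 0 p a.-1.

Definition swap_adj (p : seq nat) (a : nat) : seq nat :=
  set_nth 0 (set_nth 0 p a.-1 (entry p a.+1)) a (entry p a).

Definition sigma (n : nat) (w : seq nat) (k : nat) : seq nat :=
  foldl swap_adj (iota 1 n) (take k w).

Definition sorting_network (n : nat) (w : seq nat) : Prop :=
  size w = 'C(n, 2) /\ all (fun a => (1 <= a) && (a <= n.-1)) w /\
  sigma n w (size w) = rev (iota 1 n).

Definition contains132 (p : seq nat) : Prop :=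
  exists a b c, [/\ a < b, b < c, c < size p &
    nth 0 p a < nth 0 p c < nth 0 p b].

Definition avoids132 (p : seq nat) : Prop := ~ contains132 p.

Definition avoiding132_network (n : nat) (w : seq nat) : Prop :=
  sorting_network n w /\ forall k, k <= size w -> avoids132 (sigma n w k).

Definition swaps_at (n : nat) (w : seq nat) (k i j : nat) : Prop :=
  let p := sigma n w k.-1 in
  let a := nth 0 w k.-1 in
  (entry p a = i /\ entry p a.+1 = j) \/ (entry p a = j /\ entry p a.+1 = i).

(* Main.v *)
Require Import Defs.
From mathcomp Require Import all_boot.
From mathcomp Require Import zify.
Set Implicit Arguments. Unset Strict Implicit. Unset Printing Implicit Defensive.

Fixpoint sw (q : nat) (s : seq nat) : seq nat :=
  match q, s with
  | 0, x :: y :: t => y :: x :: t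
  | q'.+1, x :: t => x :: sw q' t
  | _, _ => s
  end.

Definition tq (q r : nat) := if r == q then q.+1 else if r == q.+1 then q else r.

Lemma perm_sw q s : perm_eq (sw q s) s.
Proof.
elim: q s => [|q IH] [|x t] //=; last by rewrite perm_cons IH.
by case: t => [|y t] //=; apply/permP => a /=; rewrite addnCA.
Qed.

Lemma size_sw q s : size (sw q s) = size s.
Proof. exact: perm_size (perm_sw q s). Qed.

Ltac tqc := rewrite /tq; repeat (case: ifP => [/eqP ?|/negbT/eqP ?]); lia.

Lemma tqS q r : tq q.+1 r.+1 = (tq q r).+1.
Proof. by rewrite /tq !eqSS; case: (r == q); case: (r == q.+1). Qed.

Lemma tqK q r : tq q (tq q r) = r.
Proof.
rewrite {2}/tq; case: (r =P q) => [->|h1]; [|case: (r =P q.+1) => [->|h2]]; tqc.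
Qed.

Lemma tq_lt q r m : q.+1 < m -> (tq q r < m) = (r < m).
Proof. move=> h; tqc. Qed.

Lemma tq_trans q a b : a < b -> tq q b < tq q a -> a = q /\ b = q.+1.
Proof. tqc. Qed.

Lemma tq_big q m : q.+1 < m -> tq q m = m.
Proof. move=> h; tqc. Qed.

Lemma nth_sw q s r : q.+1 < size s -> nth 0 (sw q s) r = nth 0 s (tq q r).
Proof.
elim: q s r => [|q IH] [|x [|y t]] //= r h.
- by case: r => [|[|r]].
- case: r => [|r]; first by rewrite /tq.
  by rewrite tqS /= (IH (y :: t)).
Qed.

Lemma swap_adj_sw p a : 1 <= a -> a < size p -> swap_adj p a = sw a.-1 p.
Proof.
case: a => // q _ h; apply: (@eq_from_nth _ 0).
  by rewrite size_sw !size_set_nth; lia.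
move=> r _; rewrite nth_sw // !nth_set_nth /= /entry /= /tq.
case: (r =P q.+1) => [->|h1]; first by rewrite (_ : (q.+1 == q) = false) ?eqxx //; lia.
case: (r =P q) => [->|h2]; rewrite nth_set_nth /=; first by rewrite eqxx.
by case: (r =P q).
Qed.

Fixpoint inv (s : seq nat) : nat :=
  if s is x :: t then count (fun y => y < x) t + inv t else 0.

Lemma inv_sw q s : q.+1 < size s ->
  inv (sw q s) + (nth 0 s q.+1 < nth 0 s q) = inv s + (nth 0 s q < nth 0 s q.+1).
Proof.
elim: q s => [|q IH] [|x [|y t]] //= h.
- case: (ltngtP x y) => H /=; lia.
- rewrite -addnA (IH (y :: t)) // addnA; congr (_ + _ + _).
  exact: (permP (perm_sw q (y :: t))).
Qed.

Lemma inv_le s : inv s <= 'C(size s, 2).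
Proof.
elim: s => //= x t IH; rewrite binS bin1.
have := count_size (fun y => y < x) t; lia.
Qed.

Lemma inv_iota m k : inv (iota m k) = 0.
Proof.
elim: k m => //= k IH m; rewrite IH addn0.
have : ~~ has (fun y => y < m) (iota m.+1 k).
  by apply/hasPn => y; rewrite mem_iota; lia.
by rewrite has_count -leqNgt leqn0 => /eqP.
Qed.

Lemma inv_rev_iota n : inv (rev (iota 1 n)) = 'C(n, 2).
Proof.
elim: n => // n IH.
have -> : iota 1 n.+1 = iota 1 n ++ [:: n.+1] by rewrite -(addn1 n) iotaD add1n addn1.
rewrite rev_cat /= IH binS bin1.
have : all (fun y => y < n.+1) (iota 1 n).
  by apply/allP => y; rewrite mem_iota; lia.
rewrite all_count count_rev size_iota => /eqP ->; exact: addnC.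
Qed.

Lemma index_sw q s c : uniq s -> q.+1 < size s ->
  index c (sw q s) = tq q (index c s).
Proof.
move=> U h; have U' : uniq (sw q s) by rewrite (perm_uniq (perm_sw q s)).
case: (boolP (c \in s)) => cs.
  have hr : index c s < size s by rewrite index_mem.
  rewrite -{1}(nth_index 0 cs) -{1}(tqK q (index c s)) -nth_sw //.
  by rewrite index_uniq // size_sw tq_lt.
have cs' : c \notin sw q s by rewrite (perm_mem (perm_sw q s)).
by rewrite !memNindex // size_sw tq_big.
Qed.

Lemma find_trans (P : nat -> bool) N : ~~ P 0 -> P N ->
  exists t, [/\ t < N, ~~ P t & P t.+1].
Proof.
elim: N => [|N IH] h0 hN; first by rewrite hN in h0.
case: (boolP (P N)) => hPN.
  by case: (IH h0 hPN) => t [a b c]; exists t; split => //; lia.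
by exists N.
Qed.

Lemma tq_small q r : r < q -> tq q r = r.
Proof. move=> h; tqc. Qed.

Lemma tq_l q : tq q q = q.+1.
Proof. by rewrite /tq eqxx. Qed.

Lemma tq_r q : tq q q.+1 = q.
Proof. by rewrite /tq (gtn_eqF (ltnSn q)) eqxx. Qed.

Lemma index_at (s : seq nat) r c : uniq s -> r < size s -> nth 0 s r = c -> index c s = r.
Proof. by move=> U h <-; rewrite index_uniq. Qed.

Lemma index_neq (p : seq nat) x y : x \in p -> y \in p -> x != y -> index x p != index y p.
Proof. move=> hx hy; apply: contra => /eqP e; by rewrite -(nth_index 0 hx) e nth_index. Qed.

Lemma sigma0 n w : sigma n w 0 = iota 1 n.
Proof. by rewrite /sigma take0. Qed.

Lemma sigma_step n w k : k < size w ->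
  sigma n w k.+1 = swap_adj (sigma n w k) (nth 0 w k).
Proof. by move=> h; rewrite /sigma (take_nth 0 h) foldl_rcons. Qed.

Lemma net_range n w k : sorting_network n w -> k < size w ->
  1 <= nth 0 w k /\ nth 0 w k < n.
Proof.
case=> _ [Hall _] h; have /allP/(_ _ (mem_nth 0 h)) := Hall.
move=> /andP [a b]; rewrite -subn1 in b; split => //; apply: (leq_ltn_trans b); have := leq_trans a b; lia.
Qed.

Lemma net_perm n w k : sorting_network n w -> k <= size w ->
  perm_eq (sigma n w k) (iota 1 n).
Proof.
move=> Hs; elim: k => [|k IH] hk; first by rewrite sigma0.
have hk' : k < size w by [].
have [a1 a2] := net_range Hs hk'.
have sz : size (sigma n w k) = n by rewrite (perm_size (IH (ltnW hk'))) size_iota.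
rewrite sigma_step // swap_adj_sw ?sz //.
exact: perm_trans (perm_sw _ _) (IH (ltnW hk')).
Qed.

Lemma net_size n w k : sorting_network n w -> k <= size w -> size (sigma n w k) = n.
Proof. by move=> Hs hk; rewrite (perm_size (net_perm Hs hk)) size_iota. Qed.

Lemma net_uniq n w k : sorting_network n w -> k <= size w -> uniq (sigma n w k).
Proof. by move=> Hs hk; rewrite (perm_uniq (net_perm Hs hk)) iota_uniq. Qed.

Lemma net_mem n w k c : sorting_network n w -> k <= size w -> 1 <= c -> c <= n ->
  c \in sigma n w k.
Proof. move=> Hs hk h1 h2; rewrite (perm_mem (net_perm Hs hk)) mem_iota; lia. Qed.

Lemma net_sw n w k : sorting_network n w -> k < size w ->
  sigma n w k.+1 = sw (nth 0 w k).-1 (sigma n w k) /\ (nth 0 w k).-1.+1 < n.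
Proof.
move=> Hs hk; have [a1 a2] := net_range Hs hk.
rewrite sigma_step // swap_adj_sw ?(net_size Hs (ltnW hk)) //; split => //; lia.
Qed.

Lemma net_good n w k : sorting_network n w -> k < size w ->
  nth 0 (sigma n w k) (nth 0 w k).-1 < nth 0 (sigma n w k) (nth 0 w k).-1.+1.
Proof.
move=> Hs hk; have HH := Hs; case: HH => Hsz [Hall Hend].
have fstep m : m < size w -> inv (sigma n w m.+1) +
   (nth 0 (sigma n w m) (nth 0 w m).-1.+1 < nth 0 (sigma n w m) (nth 0 w m).-1) =
   inv (sigma n w m) + (nth 0 (sigma n w m) (nth 0 w m).-1 < nth 0 (sigma n w m) (nth 0 w m).-1.+1).
  move=> hm; have [-> h2] := net_sw Hs hm.
  by rewrite inv_sw // (net_size Hs (ltnW hm)).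
have fstep' m : m < size w -> inv (sigma n w m.+1) <= inv (sigma n w m) + 1.
  move=> hm; have := fstep m hm.
  case: (_ < _); case: (_ < _) => /=; lia.
have fle m : m <= size w -> inv (sigma n w m) <= m.
  elim: m => [|m IH] hm; first by rewrite sigma0 inv_iota.
  have := fstep' m hm; have := IH (ltnW hm); lia.
have fmono d : k.+1 + d <= size w ->
    inv (sigma n w (k.+1 + d)) <= inv (sigma n w k.+1) + d.
  elim: d => [|d IH] hd; first by rewrite !addn0.
  rewrite addnS in hd *; have := fstep' (k.+1 + d) hd.
  have := IH (ltnW hd); lia.
apply/negPn/negP => bad.
have f1 : inv (sigma n w k.+1) <= inv (sigma n w k).
  have := fstep k hk; move: bad; case: (_ < _); case: (_ < _) => //=; lia.
have := fmono (size w - k.+1); rewrite subnKC // Hend inv_rev_iota -Hsz.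
have := fle k (ltnW hk); lia.
Qed.

Lemma net_trans n w m x y : sorting_network n w -> m < size w ->
  index x (sigma n w m) < index y (sigma n w m) ->
  index y (sigma n w m.+1) < index x (sigma n w m.+1) ->
  index x (sigma n w m) = (nth 0 w m).-1 /\ index y (sigma n w m) = (nth 0 w m).-1.+1.
Proof.
move=> Hs hm h1; have [-> h2] := net_sw Hs hm.
rewrite !index_sw ?(net_uniq Hs (ltnW hm)) ?(net_size Hs (ltnW hm)) //.
exact: tq_trans.
Qed.

Lemma net_mono1 n w i j t : sorting_network n w -> i < j -> 1 <= i -> j <= n ->
  t < size w ->
  index i (sigma n w t.+1) < index j (sigma n w t.+1) ->
  index i (sigma n w t) < index j (sigma n w t).
Proof.
move=> Hs hij hi hj ht h.
have hmi := net_mem Hs (ltnW ht) hi (ltnW (leq_trans hij hj)).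
have hmj := net_mem Hs (ltnW ht) (leq_trans hi (ltnW hij)) hj.
have ne := index_neq hmj hmi (negbT (gtn_eqF hij)).
rewrite ltnNge leq_eqVlt (negbTE ne) /=; apply/negP => hlt.
have [e1 e2] := net_trans Hs ht hlt h.
have := net_good Hs ht; rewrite -e2 -e1 !nth_index //; lia.
Qed.

Lemma net_mono n w i j m d : sorting_network n w -> i < j -> 1 <= i -> j <= n ->
  m + d <= size w ->
  index i (sigma n w (m + d)) < index j (sigma n w (m + d)) ->
  index i (sigma n w m) < index j (sigma n w m).
Proof.
move=> Hs hij hi hj; elim: d => [|d IH]; first by rewrite addn0.
rewrite addnS => hd h; apply: IH; first exact: ltnW.
exact: net_mono1 Hs hij hi hj hd h.
Qed.

Lemma net_no132 n w m a b c : avoiding132_network n w -> m <= size w ->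
  a < b -> b < c -> c < n ->
  nth 0 (sigma n w m) a < nth 0 (sigma n w m) c ->
  nth 0 (sigma n w m) c < nth 0 (sigma n w m) b -> False.
Proof.
case=> Hs Hav hm hab hbc hc h1 h2; apply: (Hav m hm); exists a, b, c; split => //.
  by rewrite (net_size Hs hm).
by rewrite h1 h2.
Qed.

Lemma idx0 n w c : 1 <= c -> c <= n -> index c (sigma n w 0) = c.-1.
Proof.
move=> h1 h2; rewrite sigma0; apply: index_at; rewrite ?iota_uniq ?size_iota; try lia.
rewrite nth_iota; lia.
Qed.

Lemma idxN n w c : sorting_network n w -> 1 <= c -> c <= n ->
  index c (sigma n w (size w)) = n - c.
Proof.
case=> _ [_ ->] h1 h2; apply: index_at; rewrite ?rev_uniq ?iota_uniq ?size_rev ?size_iota; try lia.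
rewrite nth_rev ?size_iota; try lia.
rewrite nth_iota; lia.
Qed.

Theorem mainTheorem7 (n : nat) (w : seq nat) (i j : nat) :
  avoiding132_network n w -> 1 <= i -> i < j -> j <= n ->
  (exists k, [/\ 1 <= k, k <= size w & swaps_at n w k i j]) /\
  (forall k, 1 <= k -> k <= size w -> swaps_at n w k i j ->
     nth 0 w k.-1 = j - i).
Proof.
move=> H hi hij hjn; case: (H) => Hs Hav.
have mem m c : m <= size w -> 1 <= c -> c <= n -> c \in sigma n w m.
  by move=> hm h1 h2; apply: net_mem.
split.
- pose P m := index j (sigma n w m) < index i (sigma n w m).
  have [t [ht h0 h1]] : exists t, [/\ t < size w, ~~ P t & P t.+1].
    apply: find_trans; rewrite /P.
    + rewrite !idx0 //; lia.
    + rewrite !(idxN Hs) //; lia.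
  have hlt : index i (sigma n w t) < index j (sigma n w t).
    have ne := index_neq (mem t i (ltnW ht) hi (ltnW (leq_trans hij hjn)))
                         (mem t j (ltnW ht) (leq_trans hi (ltnW hij)) hjn)
                         (negbT (ltn_eqF hij)).
    move: h0; rewrite /P; move: ne; case: ltngtP => //.
  have [e1 e2] := net_trans Hs ht hlt h1.
  have [a1 a2] := net_range Hs ht.
  exists t.+1; split => //; rewrite /swaps_at /=; left; rewrite /entry /=.
  rewrite prednK // in e2.
  split.
  + by rewrite -e1 nth_index // mem //; try lia.
  + by rewrite -e2 nth_index // mem //; try lia.
- case=> [//|t] _ ht; rewrite /swaps_at /= /entry /=.
  have [a1 a2] := net_range Hs ht.
  have hg := net_good Hs ht.
  have [Esw hq] := net_sw Hs ht.
  have sz := net_size Hs (ltnW ht).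
  have U := net_uniq Hs (ltnW ht).
  move: Esw hg hq a1 a2; case: (nth 0 w t) => [//|q] /= Esw hg hq _ _.
  set p := sigma n w t in Esw hg sz U *.
  case=> [[Ei Ej]|[Ej Ei]]; last by rewrite Ej Ei in hg; lia.
  suff : q = j - i.+1 by lia.
  have ii : index i p = q by apply: index_at => //; rewrite sz; lia.
  have ij : index j p = q.+1 by apply: index_at => //; rewrite sz; lia.
  have ne r1 r2 : r1 < n -> r2 < n -> r1 != r2 -> nth 0 p r1 != nth 0 p r2.
    by move=> h1 h2 h3; rewrite nth_uniq ?sz.
  have claim v : (v \in take q p) = (i < v < j).
    apply/idP/idP.
    + move=> vT.
      have hr : index v (take q p) < q.
        have sq : size (take q p) = q by rewrite size_takel // sz; lia.
        by rewrite -{2}sq index_mem.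
      have vp : nth 0 p (index v (take q p)) = v by rewrite -(nth_take 0 hr) nth_index.
      set r := index v (take q p) in hr vp.
      have hrn : r < n by lia.
      have vn : 1 <= v <= n.
        have : v \in p by rewrite -vp mem_nth // sz.
        by rewrite (perm_mem (net_perm Hs (ltnW ht))) mem_iota; lia.
      case: (ltngtP v i) => [vlt|vgt|veq].
      * exfalso; apply: (@net_no132 n w t.+1 r q q.+1) => //; try lia.
          by rewrite Esw !nth_sw ?sz // tq_small // tq_r vp Ei.
        by rewrite Esw !nth_sw ?sz // tq_r tq_l Ei Ej.
      * case: (ltngtP v j) => [vj|vj|vj]; first by apply/andP.
        --
           exfalso.
           pose P m := index v (sigma n w m) < index i (sigma n w m).
           have ht' : t < size w by [].
           have [m [hm h0 h1]] : exists m, [/\ m < t, ~~ P m & P m.+1].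
             apply: find_trans; rewrite /P.
             ++ rewrite !idx0 //; lia.
             ++ change (index v p < index i p).
                rewrite (index_at U _ vp) ?sz // ii; lia.
           have hmw : m < size w by lia.
           have vn1 : 1 <= v by case/andP: vn.
           have vn2 : v <= n by case/andP: vn.
           have memm c : 1 <= c -> c <= n -> c \in sigma n w m.
             by move=> c1 c2; apply: mem => //; lia.
           have hlt : index i (sigma n w m) < index v (sigma n w m).
             have nev := index_neq (memm i hi (ltnW (leq_trans hij hjn)))
                         (memm v vn1 vn2)
                         (negbT (ltn_eqF vgt)).
             move: h0; rewrite /P; move: nev; case: ltngtP => //.
           have [e1 e2] := net_trans Hs hmw hlt h1.
           have hij' : index i (sigma n w m) < index j (sigma n w m).
             apply: (@net_mono n w i j m (t - m) Hs hij hi hjn); first lia.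
             rewrite subnKC; last lia.
             change (index i p < index j p).
             rewrite ii ij; lia.
           have hmj := memm j (leq_trans hi (ltnW hij)) hjn.
           have nej := index_neq hmj (memm v vn1 vn2) (negbT (ltn_eqF vj)).
           have hjs : index j (sigma n w m) < n.
             by have := index_mem j (sigma n w m); rewrite hmj (net_size Hs (ltnW hmw)).
           apply: (@net_no132 n w m (nth 0 w m).-1 (nth 0 w m).-1.+1 (index j (sigma n w m)) H) => //; try lia.
           ++ by rewrite -e1 !nth_index // memm //; lia.
           ++ by rewrite -e2 !nth_index // memm //; lia.
        -- exfalso; move: (ne r q.+1 hrn hq); rewrite vp Ej vj eqxx; lia.
      * exfalso; move: (ne r q hrn (ltnW hq)); rewrite vp Ei veq eqxx; lia.
    + move=> /andP [vi vj].
      have vp : v \in p by apply: mem; lia.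
      have hr : index v p < n by rewrite -sz index_mem.
      have ev := nth_index 0 vp.
      set r := index v p in hr ev.
      have hrq : r < q.
        case: (ltngtP r q) => [//|hgt|heq].
        * case: (ltngtP r q.+1) => [|hgt2|heq2]; first lia.
          -- exfalso; apply: (@net_no132 n w t q q.+1 r H) => //; try lia.
             ++ by rewrite ev Ei.
             ++ by rewrite ev Ej.
          -- exfalso; move: ev; rewrite heq2 Ej; lia.
        * exfalso; move: ev; rewrite heq Ei; lia.
      rewrite -ev -(nth_take 0 hrq) mem_nth // size_takel // sz; lia.
  have hp : perm_eq (take q p) (iota i.+1 (j - i.+1)).
    apply: uniq_perm; [exact: take_uniq | exact: iota_uniq |].
    move=> v; rewrite claim mem_iota; apply/idP/idP => /andP [h1 h2]; apply/andP; lia.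
  have hqs : q <= size p by rewrite sz; lia.
  by have := perm_size hp; rewrite size_takel // size_iota.
Qed.
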